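(* Let $\Omega\subset\mathbb{R}^2$ be a connected open set. Let $\Phi(x^1,x^2;\lambda)$ be an invertible $n\times n$ matrix function, smooth in $(x^1,x^2)$ and holomorphic in $\lambda$ near $\lambda_i$ with $\Phi(x;\lambda_i)$ invertible. Let $T(x^1,x^2;\lambda)=\sum_{j=0}^N C_j(x^1,x^2)\lambda^j$ be a matrix polynomial in $\lambda$ with smooth coefficients, such that $\lambda_i$ (a constant) is a simple zero of $\lambda\mapsto\det T(x;\lambda)$ for every $x\in\Omega$. Put $\tilde\Phi=T\Phi$ and suppose that there are matrix functions $\tilde U_k(x;\lambda)$, $k=1,2$, holomorphic in $\lambda$ in a neighbourhood of $\lambda_i$, with $\tilde\Phi_{,k}=\tilde U_k\tilde\Phi$. Then there exists a constant vector $p_i\in\mathbb{C}^n$, $p_i\neq 0$, such that $\tilde\Phi(x;\lambda_i)p_i=0$ and $\tilde\Phi_{,k}(x;\lambda_i)p_i=0$ for $k=1,2$ and all $x\in\Omega$.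
   Context: $f_{,k}$ denotes $\partial f/\partial x^k$ with $(x^1,x^2)\in\Omega$. *)

(* Defs.v *)
From HB Require Export structures.
From Stdlib Require Export Reals.
From Stdlib Require Import Lra ClassicalEpsilon FunctionalExtensionality PropExtensionality.
From mathcomp Require Export all_boot all_order all_algebra.
Set Implicit Arguments. Unset Strict Implicit. Unset Printing Implicit Defensive.

Record complex := mkC { Cre : R; Cim : R }.

Definition C_eqb (z w : complex) : bool :=
  if Req_EM_T (Cre z) (Cre w) then (if Req_EM_T (Cim z) (Cim w) then true else false) else false.

Lemma C_eqP : Equality.axiom C_eqb.
Proof.
move=> [a b] [c d]; rewrite /C_eqb /=.
case: Req_EM_T => [h1|h]; last by constructor; case.
case: Req_EM_T => [h2|h]; last by constructor; case.
by constructor; rewrite h1 h2.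
Qed.
HB.instance Definition _ := hasDecEq.Build complex C_eqP.

Definition C_find (P : pred complex) (n : nat) : option complex :=
  match excluded_middle_informative (exists x, P x) with
  | left h => Some (proj1_sig (constructive_indefinite_description _ h))
  | right _ => None
  end.

Lemma C_choice_correct P n x : C_find P n = Some x -> P x.
Proof.
rewrite /C_find; case: excluded_middle_informative => // h [<-].
exact: (proj2_sig (constructive_indefinite_description _ h)).
Qed.

Lemma C_choice_complete (P : pred complex) : (exists x, P x) -> exists n, C_find P n.
Proof. by move=> h; exists 0%N; rewrite /C_find; case: excluded_middle_informative. Qed.

Lemma C_choice_ext (P Q : pred complex) : P =1 Q -> C_find P =1 C_find Q.
Proof.
move=> h; have -> // : P = Q by apply: functional_extensionality.
Qed.

HB.instance Definition _ := hasChoice.Build complex C_choice_correct C_choice_complete C_choice_ext.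

Local Open Scope R_scope.
Definition C0 := mkC 0 0.
Definition C1 := mkC 1 0.
Definition Cadd z w := mkC (Cre z + Cre w) (Cim z + Cim w).
Definition Copp z := mkC (- Cre z) (- Cim z).
Definition Cmul z w := mkC (Cre z * Cre w - Cim z * Cim w) (Cre z * Cim w + Cim z * Cre w).
Definition Cinv z := let d := Cre z ^ 2 + Cim z ^ 2 in
  mkC (Cre z / d) (- Cim z / d).
Local Close Scope R_scope.

Lemma Cext a b c d : a = c -> b = d -> mkC a b = mkC c d.
Proof. by move=> -> ->. Qed.

Lemma CaddA : associative Cadd.
Proof. move=> [a b] [c d] [e f]; apply: Cext => /=; ring. Qed.
Lemma CaddC : commutative Cadd.
Proof. move=> [a b] [c d]; apply: Cext => /=; ring. Qed.
Lemma Cadd0 : left_id C0 Cadd.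
Proof. move=> [a b]; apply: Cext => /=; ring. Qed.
Lemma CaddN : left_inverse C0 Copp Cadd.
Proof. move=> [a b]; apply: Cext => /=; ring. Qed.
HB.instance Definition _ := GRing.isZmodule.Build complex CaddA CaddC Cadd0 CaddN.

Lemma CmulA : associative Cmul.
Proof. move=> [a b] [c d] [e f]; apply: Cext => /=; ring. Qed.
Lemma CmulC : commutative Cmul.
Proof. move=> [a b] [c d]; apply: Cext => /=; ring. Qed.
Lemma Cmul1 : left_id C1 Cmul.
Proof. move=> [a b]; apply: Cext => /=; ring. Qed.
Lemma CmulDl : left_distributive Cmul Cadd.
Proof. move=> [a b] [c d] [e f]; apply: Cext => /=; ring. Qed.
Lemma C1_neq0 : C1 != C0.
Proof. apply/eqP; case; exact: R1_neq_R0. Qed.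
HB.instance Definition _ := GRing.Zmodule_isComNzRing.Build complex CmulA CmulC Cmul1 CmulDl C1_neq0.

Lemma CmulV (z : complex) : z != GRing.zero -> Cmul (Cinv z) z = @GRing.one complex.
Proof.
case: z => a b /eqP nz; have hd : Rplus (pow a 2) (pow b 2) <> R0.
  move=> h; apply: nz; have ha : a = R0 by nra. have hb : b = R0 by nra.
  by rewrite ha hb.
rewrite /Cmul /Cinv /=; apply: Cext => /=; field; move: hd; rewrite /= !Rmult_1_r; exact.
Qed.
Lemma Cinv0 : Cinv GRing.zero = GRing.zero.
Proof. apply: Cext => /=; rewrite /Rdiv; ring. Qed.
HB.instance Definition _ := GRing.ComNzRing_isField.Build complex CmulV Cinv0.


Definition Pt := (R * R)%type.

Inductive xdir := X1 | X2.

Local Open Scope R_scope.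

Definition Cnorm (z : complex) : R := sqrt (Cre z ^ 2 + Cim z ^ 2).

Definition ball2 (x : Pt) (r : R) (y : Pt) : Prop :=
  sqrt ((fst y - fst x) ^ 2 + (snd y - snd x) ^ 2) < r.

Definition open_set (Om : Pt -> Prop) : Prop :=
  forall x, Om x -> exists r, 0 < r /\ forall y, ball2 x r y -> Om y.

(* connected (and, as usual for a domain, nonempty) *)
Definition connected (Om : Pt -> Prop) : Prop :=
  (exists x, Om x) /\
  forall U V : Pt -> Prop, open_set U -> open_set V ->
    (forall x, Om x -> U x \/ V x) ->
    (forall x, Om x -> U x -> V x -> False) ->
    (forall x, Om x -> U x) \/ (forall x, Om x -> V x).

Definition xcomp (k : xdir) (x : Pt) : R :=
  match k with X1 => fst x | X2 => snd x end.

Definition shift (k : xdir) (x : Pt) (t : R) : Pt :=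
  match k with X1 => (t, snd x) | X2 => (fst x, t) end.

Definition is_pderivC (k : xdir) (f : Pt -> complex) (x : Pt) (d : complex) : Prop :=
  derivable_pt_lim (fun t => Cre (f (shift k x t))) (xcomp k x) (Cre d) /\
  derivable_pt_lim (fun t => Cim (f (shift k x t))) (xcomp k x) (Cim d).

(* the partial derivative f_{,k}(x) (arbitrary value 0 when it does not exist) *)
Definition pderivC (k : xdir) (f : Pt -> complex) (x : Pt) : complex :=
  match excluded_middle_informative (exists d, is_pderivC k f x d) with
  | left h => proj1_sig (constructive_indefinite_description _ h)
  | right _ => C0
  end.

Fixpoint iter_pderivC (s : seq xdir) (f : Pt -> complex) : Pt -> complex :=
  match s with
  | [::] => f
  | k :: s' => pderivC k (iter_pderivC s' f)
  end.

Definition continuous_atC (f : Pt -> complex) (x : Pt) : Prop :=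
  forall eps, 0 < eps -> exists delta, 0 < delta /\
    forall y, ball2 x delta y -> Cnorm (Cadd (f y) (Copp (f x))) < eps.

Definition smooth_on (Om : Pt -> Prop) (f : Pt -> complex) : Prop :=
  forall (s : seq xdir) (x : Pt), Om x ->
    continuous_atC (iter_pderivC s f) x /\
    forall k, exists d, is_pderivC k (iter_pderivC s f) x d.

Local Close Scope R_scope.
Local Open Scope ring_scope.

Definition has_cderiv (g : complex -> complex) (z l : complex) : Prop :=
  forall eps : R, Rlt 0 eps -> exists delta : R, Rlt 0 delta /\
    forall h : complex, h != 0 -> Rlt (Cnorm h) delta ->
      Rlt (Cnorm ((g (z + h) - g z) / h - l)) eps.

Definition holo_at (g : complex -> complex) (z : complex) : Prop := exists l, has_cderiv g z l.

Definition simple_zero (g : complex -> complex) (z : complex) : Prop :=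
  g z = 0 /\ exists l, l != 0 /\ has_cderiv g z l.

Definition smooth_mx n (Om : Pt -> Prop) (F : Pt -> 'M[complex]_n) : Prop :=
  forall i j, smooth_on Om (fun x => F x i j).

Definition holo_mx n (G : complex -> 'M[complex]_n) (z : complex) : Prop :=
  forall i j, holo_at (fun l => G l i j) z.

Definition is_pderiv_mx n (k : xdir) (F : Pt -> 'M[complex]_n) (x : Pt) (D : 'M[complex]_n) : Prop :=
  forall i j, is_pderivC k (fun y => F y i j) x (D i j).

Definition pderiv_mx n (k : xdir) (F : Pt -> 'M[complex]_n) (x : Pt) : 'M[complex]_n :=
  \matrix_(i, j) pderivC k (fun y => F y i j) x.

Definition Tev n (Cf : nat -> Pt -> 'M[complex]_n) (N : nat) (x : Pt) (lam : complex) : 'M[complex]_n :=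
  \sum_(j < N.+1) lam ^+ j *: Cf j x.

Definition tPhi n (Cf : nat -> Pt -> 'M[complex]_n) (N : nat) (Phi : Pt -> complex -> 'M[complex]_n)
  (x : Pt) (lam : complex) : 'M[complex]_n :=
  Tev Cf N x lam *m Phi x lam.

(* Main.v *)
Require Import Defs.
From Stdlib Require Import Lra Psatz ClassicalEpsilon FunctionalExtensionality.
Set Implicit Arguments. Unset Strict Implicit.
Import GRing.Theory.

Section CBasic.
Local Open Scope R_scope.

Lemma Cnorm_ge0 z : 0 <= Cnorm z.
Proof. apply sqrt_pos. Qed.

Lemma Cnorm_Re z : Rabs (Cre z) <= Cnorm z.
Proof.
rewrite /Cnorm -(sqrt_Rsqr_abs (Cre z)); apply sqrt_le_1_alt.
rewrite /Rsqr /=; nra.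
Qed.
Lemma Cnorm_Im z : Rabs (Cim z) <= Cnorm z.
Proof.
rewrite /Cnorm -(sqrt_Rsqr_abs (Cim z)); apply sqrt_le_1_alt.
rewrite /Rsqr /=; nra.
Qed.

Lemma Cnorm_eq0 z : Cnorm z = 0 -> z = C0.
Proof.
move=> h; have h1 := Cnorm_Re z; have h2 := Cnorm_Im z; rewrite h in h1 h2.
clear h; case: z h1 h2 => a b /= h1 h2.
have ha : a = 0 by have := Rabs_pos a; split_Rabs; lra.
have hb : b = 0 by have := Rabs_pos b; split_Rabs; lra.
by rewrite /C0 ha hb.
Qed.

Lemma Cnorm_pos z : z <> C0 -> 0 < Cnorm z.
Proof. move=> nz; have := Cnorm_ge0 z; case/Rle_lt_or_eq_dec => // h; exfalso; apply nz; exact: Cnorm_eq0. Qed.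

Lemma Cnorm_mul z w : Cnorm (Cmul z w) = Cnorm z * Cnorm w.
Proof.
rewrite /Cnorm -sqrt_mult; try (apply Rplus_le_le_0_compat; apply pow2_ge_0).
f_equal; case: z => a b; case: w => c d /=; ring.
Qed.

Lemma Cnorm_add z w : Cnorm (Cadd z w) <= Cnorm z + Cnorm w.
Proof.
rewrite /Cnorm; case: z => a b; case: w => c d /=.
apply Rsqr_incr_0_var; last first.
  apply Rplus_le_le_0_compat; apply sqrt_pos.
rewrite Rsqr_sqrt; last (apply Rplus_le_le_0_compat; apply pow2_ge_0).
rewrite /Rsqr.
have e1 := sqrt_sqrt (a^2+b^2) ltac:(nra).
have e2 := sqrt_sqrt (c^2+d^2) ltac:(nra).
have hp : 0 <= sqrt (a^2+b^2) * sqrt (c^2+d^2) by apply Rmult_le_pos; apply sqrt_pos.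
have hcs : a*c+b*d <= sqrt (a^2+b^2) * sqrt (c^2+d^2).
  case: (Rle_lt_dec (a*c+b*d) 0) => h; first lra.
  apply Rsqr_incr_0_var; last exact hp.
  rewrite Rsqr_mult !Rsqr_sqrt; try (apply Rplus_le_le_0_compat; apply pow2_ge_0). rewrite /Rsqr /=; have := Rle_0_sqr (a*d-b*c); rewrite /Rsqr; nra.
move: e1 e2 hcs; rewrite /= !Rmult_1_r => e1 e2 hcs; nra.
Qed.

Lemma Cnorm_opp z : Cnorm (Copp z) = Cnorm z.
Proof. rewrite /Cnorm; case: z => a b /=; f_equal; ring. Qed.

Lemma Cnorm_C0 : Cnorm C0 = 0.
Proof. rewrite /Cnorm /= !Rmult_0_l Rplus_0_l; exact sqrt_0. Qed.

Lemma Cnorm_real t : Cnorm (mkC t 0) = Rabs t.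
Proof. rewrite /Cnorm /= -sqrt_Rsqr_abs; f_equal; rewrite /Rsqr; ring. Qed.

Lemma dlim_local (f g : R -> R) x l (d : R) : Rlt 0 d ->
  (forall y, Rlt (Rabs (y - x)) d -> f y = g y) ->
  derivable_pt_lim f x l -> derivable_pt_lim g x l.
Proof.
move=> dpos hfg h eps he; case: (h eps he) => del hdel.
have hmin : Rlt 0 (Rmin del d) by apply Rmin_pos => //; exact: cond_pos del.
exists (mkposreal _ hmin) => hh hh0 hhl.
rewrite -!hfg; first (apply: hdel => //; apply: Rlt_le_trans hhl _; apply Rmin_l).
- rewrite Rminus_eq_0 Rabs_R0; lra.
- replace (x + hh - x) with hh by ring; apply: Rlt_le_trans hhl _; apply Rmin_r.
Qed.

End CBasic.
Local Open Scope ring_scope.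

Definition dC (g : R -> complex) (t : R) (d : complex) : Prop :=
  derivable_pt_lim (fun s => Cre (g s)) t (Cre d) /\
  derivable_pt_lim (fun s => Cim (g s)) t (Cim d).

Definition ex_dC (g : R -> complex) (t : R) : Prop := exists d, dC g t d.

Lemma dC_const (c : complex) t : dC (fun _ => c) t 0.
Proof. split; exact: (derivable_pt_lim_const _ t). Qed.

Lemma dC_add f g t a b : dC f t a -> dC g t b -> dC (fun s => f s + g s) t (a + b).
Proof.
case=> h1 h2 [h3 h4]; split.
  exact: (derivable_pt_lim_plus (fun s => Cre (f s)) (fun s => Cre (g s)) t _ _ h1 h3).
exact: (derivable_pt_lim_plus (fun s => Cim (f s)) (fun s => Cim (g s)) t _ _ h2 h4).
Qed.

Lemma dC_mul f g t a b : dC f t a -> dC g t b ->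
  dC (fun s => f s * g s) t (a * g t + f t * b).
Proof.
case=> h1 h2 [h3 h4]; split.
- have := derivable_pt_lim_minus _ _ _ _ _
    (derivable_pt_lim_mult (fun s => Cre (f s)) (fun s => Cre (g s)) t _ _ h1 h3)
    (derivable_pt_lim_mult (fun s => Cim (f s)) (fun s => Cim (g s)) t _ _ h2 h4).
  have -> : Cre (a * g t + f t * b) =
     Rminus (Rplus (Rmult (Cre a) (Cre (g t))) (Rmult (Cre (f t)) (Cre b))) (Rplus (Rmult (Cim a) (Cim (g t))) (Rmult (Cim (f t)) (Cim b))).
    rewrite /=; ring_simplify; reflexivity.
  exact.
- have := derivable_pt_lim_plus _ _ _ _ _
    (derivable_pt_lim_mult (fun s => Cre (f s)) (fun s => Cim (g s)) t _ _ h1 h4)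
    (derivable_pt_lim_mult (fun s => Cim (f s)) (fun s => Cre (g s)) t _ _ h2 h3).
  have -> : Cim (a * g t + f t * b) =
     Rplus (Rplus (Rmult (Cre a) (Cim (g t))) (Rmult (Cre (f t)) (Cim b))) (Rplus (Rmult (Cim a) (Cre (g t))) (Rmult (Cim (f t)) (Cre b))).
    rewrite /=; ring_simplify; reflexivity.
  exact.
Qed.

Lemma dC_unique f t a b : dC f t a -> dC f t b -> a = b.
Proof.
case=> h1 h2 [h3 h4]; case: a b h1 h2 h3 h4 => a1 a2 [b1 b2] /= h1 h2 h3 h4.
by rewrite (uniqueness_limite _ _ _ _ h1 h3) (uniqueness_limite _ _ _ _ h2 h4).
Qed.



Lemma dC_local f g t a (d : R) : Rlt 0 d ->
  (forall s, Rlt (Rabs (Rminus s t)) d -> f s = g s) -> dC f t a -> dC g t a.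
Proof.
move=> dp hfg [h1 h2]; split.
- by apply: (dlim_local dp _ h1) => y hy; rewrite hfg.
- by apply: (dlim_local dp _ h2) => y hy; rewrite hfg.
Qed.

Lemma dC_sum (I : Type) (r : seq I) (P : pred I) (F : I -> R -> complex) (d : I -> complex) t :
  (forall i, P i -> dC (F i) t (d i)) ->
  dC (fun s => \sum_(i <- r | P i) F i s) t (\sum_(i <- r | P i) d i).
Proof.
move=> h; elim: r => [|x r IH].
  rewrite big_nil; have -> : (fun s => \sum_(i <- [::] | P i) F i s) = fun _ => 0.
    by apply: functional_extensionality => s; rewrite big_nil.
  exact: dC_const.
rewrite big_cons; case: (boolP (P x)) => Px.
  have -> : (fun s => \sum_(i <- x :: r | P i) F i s) = fun s => F x s + \sum_(i <- r | P i) F i s.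
    by apply: functional_extensionality => s; rewrite big_cons Px.
  exact: dC_add (h x Px) IH.
have -> : (fun s => \sum_(i <- x :: r | P i) F i s) = fun s => \sum_(i <- r | P i) F i s.
  by apply: functional_extensionality => s; rewrite big_cons (negbTE Px).
exact IH.
Qed.

Section Closure.
Variable X : Type.
Variable Pr : (X -> complex) -> Prop.
Hypothesis Pconst : forall c, Pr (fun _ => c).
Hypothesis Padd : forall f g, Pr f -> Pr g -> Pr (fun s => f s + g s).
Hypothesis Pmul : forall f g, Pr f -> Pr g -> Pr (fun s => f s * g s).

Lemma Pr_sum (I : Type) (r : seq I) (P : pred I) (F : I -> X -> complex) :
  (forall i, P i -> Pr (F i)) -> Pr (fun s => \sum_(i <- r | P i) F i s).
Proof.
move=> h; elim: r => [|x r IH].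
  have -> : (fun s => \sum_(i <- [::] | P i) F i s) = fun _ => 0.
    by apply: functional_extensionality => s; rewrite big_nil.
  exact: Pconst.
case: (boolP (P x)) => Px.
  have -> : (fun s => \sum_(i <- x :: r | P i) F i s) = fun s => F x s + \sum_(i <- r | P i) F i s.
    by apply: functional_extensionality => s; rewrite big_cons Px.
  exact: Padd (h x Px) IH.
have -> : (fun s => \sum_(i <- x :: r | P i) F i s) = fun s => \sum_(i <- r | P i) F i s.
  by apply: functional_extensionality => s; rewrite big_cons (negbTE Px).
exact IH.
Qed.

Lemma Pr_prod (I : Type) (r : seq I) (P : pred I) (F : I -> X -> complex) :
  (forall i, P i -> Pr (F i)) -> Pr (fun s => \prod_(i <- r | P i) F i s).
Proof.
move=> h; elim: r => [|x r IH].
  have -> : (fun s => \prod_(i <- [::] | P i) F i s) = fun _ => 1.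
    by apply: functional_extensionality => s; rewrite big_nil.
  exact: Pconst.
case: (boolP (P x)) => Px.
  have -> : (fun s => \prod_(i <- x :: r | P i) F i s) = fun s => F x s * \prod_(i <- r | P i) F i s.
    by apply: functional_extensionality => s; rewrite big_cons Px.
  exact: Pmul (h x Px) IH.
have -> : (fun s => \prod_(i <- x :: r | P i) F i s) = fun s => \prod_(i <- r | P i) F i s.
  by apply: functional_extensionality => s; rewrite big_cons (negbTE Px).
exact IH.
Qed.

Lemma Pr_det n (M : X -> 'M[complex]_n) :
  (forall i j, Pr (fun s => M s i j)) -> Pr (fun s => \det (M s)).
Proof.
move=> h; rewrite /determinant.
apply: Pr_sum => sg _; apply: Pmul; first exact: Pconst.
by apply: Pr_prod => i _; apply: h.
Qed.

Lemma Pr_adj n (M : X -> 'M[complex]_n) :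
  (forall i j, Pr (fun s => M s i j)) -> forall i j, Pr (fun s => \adj (M s) i j).
Proof.
move=> h i j.
have -> : (fun s => \adj (M s) i j) = fun s => (-1) ^+ (j + i) * \det (row' j (col' i (M s))).
  by apply: functional_extensionality => s; rewrite mxE.
apply: Pmul; first exact: Pconst.
apply: Pr_det => a b.
have -> : (fun s => row' j (col' i (M s)) a b) = fun s => M s (lift j a) (lift i b).
  by apply: functional_extensionality => s; rewrite !mxE.
exact: h.
Qed.

Lemma Pr_mulmx m n p (A : X -> 'M[complex]_(m, n)) (B : X -> 'M[complex]_(n, p)) :
  (forall i j, Pr (fun s => A s i j)) -> (forall i j, Pr (fun s => B s i j)) ->
  forall i j, Pr (fun s => (A s *m B s) i j).
Proof.
move=> hA hB i j.
have -> : (fun s => (A s *m B s) i j) = fun s => \sum_k A s i k * B s k j.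
  by apply: functional_extensionality => s; rewrite mxE.
by apply: Pr_sum => k _; apply: Pmul.
Qed.
End Closure.

Lemma ex_dC_const c t : ex_dC (fun _ => c) t.
Proof. by exists 0; apply: dC_const. Qed.
Lemma ex_dC_add f g t : ex_dC f t -> ex_dC g t -> ex_dC (fun s => f s + g s) t.
Proof. by case=> a ha [b hb]; exists (a + b); apply: dC_add. Qed.
Lemma ex_dC_mul f g t : ex_dC f t -> ex_dC g t -> ex_dC (fun s => f s * g s) t.
Proof. by case=> a ha [b hb]; eexists; apply: dC_mul ha hb. Qed.

Section RealAux.
Local Open Scope R_scope.
Lemma dlim_eq f x l l' : derivable_pt_lim f x l -> l = l' -> derivable_pt_lim f x l'.
Proof. by move=> h <-. Qed.

Lemma zero_deriv_const (g : R -> R) c e :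
  (forall x, c < x < e -> derivable_pt_lim g x 0) ->
  forall s t, c < s < e -> c < t < e -> g s = g t.
Proof.
move=> h.
have key : forall s t, c < s < e -> c < t < e -> s < t -> g s = g t.
  move=> s t hs ht st.
  have pr : forall x, s < x < t -> derivable_pt g x.
    move=> x hx; exists 0; apply: h; lra.
  have H := @null_derivative_loc g s t pr.
  have Cst : constant_D_eq g (fun x => s <= x <= t) (g s).
    apply: H.
    - move=> x hx; apply: derivable_continuous_pt; exists 0; apply: h; lra.
    - move=> x P; rewrite /derive_pt; case: (pr x P) => l hl /=.
      apply: (uniqueness_limite g x); first exact: hl. apply: h; lra.
  symmetry; apply: Cst; lra.
move=> s t hs ht; case: (Rtotal_order s t) => [st|[->|ts]] //.
  exact: key.
symmetry; exact: key.
Qed.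
End RealAux.

Lemma dC_inv f t a : f t != 0 -> dC f t a ->
  dC (fun s => (f s)^-1) t (- (a * (f t)^-1 * (f t)^-1)).
Proof.
move=> nz [h1 h2].
set u := fun s => Cre (f s). set v := fun s => Cim (f s).
have hD0 : Rplus (Rmult (u t) (u t)) (Rmult (v t) (v t)) <> R0.
  move=> h; apply: (negP nz); apply/eqP; rewrite /u /v in h.
  case: (f t) h => p q /= h.
  case: (Rplus_sqr_eq_0 p q h) => hp hq.
  rewrite hp hq; reflexivity.
have hD : derivable_pt_lim (fun s => Rplus (u s ^ 2) (v s ^ 2)) t
   (Rplus (Rmult (Rmult 2 (u t)) (Cre a)) (Rmult (Rmult 2 (v t)) (Cim a))).
  have := derivable_pt_lim_plus _ _ _ _ _
     (derivable_pt_lim_mult _ _ _ _ _ h1 (derivable_pt_lim_mult _ _ _ _ _ h1 (derivable_pt_lim_const 1 t)))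
     (derivable_pt_lim_mult _ _ _ _ _ h2 (derivable_pt_lim_mult _ _ _ _ _ h2 (derivable_pt_lim_const 1 t))).
  move=> H; apply: (dlim_eq H); rewrite /fct_cte /mult_fct /u /v /=; ring.
have hD0' : Rplus (u t ^ 2) (v t ^ 2) <> R0 by move=> h; apply: hD0; rewrite -h /=; ring.
split.
- have := derivable_pt_lim_div _ _ _ _ _ h1 hD hD0'.
  move=> H; apply: (dlim_eq H).
  rewrite /u /v /= /Rsqr.
  move: hD0; rewrite /u /v; case: (f t) => p q /= hD0.
  field; exact hD0.
- have := derivable_pt_lim_div _ _ _ _ _ (derivable_pt_lim_opp _ _ _ h2) hD hD0'.
  move=> H; apply: (dlim_eq H).
  rewrite /u /v /opp_fct /= /Rsqr.
  move: hD0; rewrite /u /v; case: (f t) => p q /= hD0.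
  field; exact hD0.
Qed.
From mathcomp.algebra_tactics Require Import ring.

Lemma ratio_const (wi wm al : R -> complex) c e :
  (forall t, Rlt c t -> Rlt t e ->
     wi t != 0 /\ dC wi t (al t * wi t) /\ dC wm t (al t * wm t)) ->
  forall s t, Rlt c s -> Rlt s e -> Rlt c t -> Rlt t e ->
  wm s / wi s = wm t / wi t.
Proof.
move=> h.
have hd : forall t, Rlt c t -> Rlt t e -> dC (fun s => wm s / wi s) t 0.
  move=> t ct te; case: (h t ct te) => nz [hi hm].
  have := dC_mul hm (dC_inv nz hi).
  have -> : al t * wm t * (wi t)^-1 + wm t * - (al t * wi t * (wi t)^-1 * (wi t)^-1) = 0.
    field; exact nz.
  exact.
move=> s t cs se ct te.
have e1 := zero_deriv_const (g := fun s => Cre (wm s / wi s)) (c := c) (e := e).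
have e2 := zero_deriv_const (g := fun s => Cim (wm s / wi s)) (c := c) (e := e).
have r1 : Cre (wm s / wi s) = Cre (wm t / wi t).
  apply: e1; try (split; assumption).
  by move=> x [cx xe]; case: (hd x cx xe).
have r2 : Cim (wm s / wi s) = Cim (wm t / wi t).
  apply: e2; try (split; assumption).
  by move=> x [cx xe]; case: (hd x cx xe).
move: r1 r2; case: (wm s / wi s) => a b; case: (wm t / wi t) => a' b' /= -> ->; reflexivity.
Qed.

Section RealAux2.
Local Open Scope R_scope.
Lemma dlim_nonzero g x l : derivable_pt_lim g x l -> g x <> 0 ->
  exists d, 0 < d /\ forall y, Rabs (y - x) < d -> g y <> 0.
Proof.
move=> h nz.
have hc : continuity_pt g x by apply: derivable_continuous_pt; exists l.
have ha : 0 < Rabs (g x) by apply Rabs_pos_lt.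
move: hc; rewrite /continuity_pt /continue_in /limit1_in /limit_in => hc.
case: (hc _ ha) => alp [alpp H]; exists alp; split => // y hy.
case: (Req_dec y x) => [->//|nyx].
have := H y; rewrite /dist /= /R_dist /D_x /no_cond => H'.
have := H' (conj (conj I (not_eq_sym nyx)) hy) => h2 hy0.
rewrite hy0 in h2; move: h2; rewrite Rminus_0_l Rabs_Ropp; lra.
Qed.
End RealAux2.

Lemma dC_nonzero f t : ex_dC f t -> f t != 0 ->
  exists d, Rlt 0 d /\ forall s, Rlt (Rabs (Rminus s t)) d -> f s != 0.
Proof.
case=> l [h1 h2] nz.
have : Cre (f t) <> R0 \/ Cim (f t) <> R0.
  case: (Req_dec (Cre (f t)) R0) => a; last by left.
  case: (Req_dec (Cim (f t)) R0) => b; last by right.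
  exfalso; apply: (negP nz); apply/eqP; move: a b; case: (f t) => p q /= -> ->; reflexivity.
case=> [hn|hn].
  case: (dlim_nonzero h1 hn) => d [dp hd]; exists d; split => // s hs.
  apply/eqP => e; apply: (hd s hs); rewrite e; reflexivity.
case: (dlim_nonzero h2 hn) => d [dp hd]; exists d; split => // s hs.
apply/eqP => e; apply: (hd s hs); rewrite e; reflexivity.
Qed.

Definition pick_dC (f : R -> complex) (t : R) : complex :=
  match excluded_middle_informative (ex_dC f t) with
  | left h => proj1_sig (constructive_indefinite_description _ h)
  | right _ => 0
  end.

Lemma pick_dC_spec f t : ex_dC f t -> dC f t (pick_dC f t).
Proof.
rewrite /pick_dC; case: excluded_middle_informative => // h _.
exact: (proj2_sig (constructive_indefinite_description _ h)).
Qed.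

Definition K1 n (M : 'M[complex]_n) := forall v w : 'cV[complex]_n,
  M *m v = 0 -> M *m w = 0 -> w != 0 -> exists a, v = a *: w.

Lemma K1_span n (M : 'M[complex]_n) (w p : 'cV[complex]_n) : K1 M -> M *m w = 0 -> w != 0 ->
  (M *m p = 0 <-> exists a, p = a *: w).
Proof.
move=> hK hw nz; split; first by move=> hp; exact: hK.
by case=> a ->; rewrite -scalemxAr hw scaler0.
Qed.

Lemma cV_nz n (w : 'cV[complex]_n) : w != 0 -> exists i, w i 0 != 0.
Proof.
move=> nz; apply: NNPP => hn; apply: (negP nz); apply/eqP/matrixP => i j.
rewrite (ord1 j) mxE; apply/eqP; apply: NNPP => h; apply: hn; exists i; exact/negP.
Qed.

Lemma core n (A A' : R -> 'M[complex]_n) (w : R -> 'cV[complex]_n) c e t0 :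
 Rlt c t0 -> Rlt t0 e ->
 (forall t, Rlt c t -> Rlt t e -> forall i j, dC (fun s => A s i j) t (A' t i j)) ->
 (forall t, Rlt c t -> Rlt t e -> forall v : 'cV[complex]_n, A t *m v = 0 -> A' t *m v = 0) ->
 (forall t, Rlt c t -> Rlt t e -> K1 (A t)) ->
 (forall t, Rlt c t -> Rlt t e -> forall i, ex_dC (fun s => w s i 0) t) ->
 (forall t, Rlt c t -> Rlt t e -> A t *m w t = 0) ->
 w t0 != 0 ->
 exists d, Rlt 0 d /\ forall s, Rlt (Rabs (Rminus s t0)) d ->
   forall p : 'cV[complex]_n, (A s *m p = 0 <-> A t0 *m p = 0).
Proof.
move=> ct0 t0e hA hA' hK hw hAw nz.
case: (cV_nz nz) => i nzi.
case: (dC_nonzero (hw t0 ct0 t0e i) nzi) => d1 [d1p hd1].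
pose d := Rmin d1 (Rmin (Rminus t0 c) (Rminus e t0)).
have dp : Rlt 0 d.
  apply: Rmin_pos => //; apply: Rmin_pos; apply: Rlt_Rminus => //.
have inJ : forall s, Rlt (Rabs (Rminus s t0)) d ->
    [/\ Rlt c s, Rlt s e & w s i 0 != 0].
  move=> s hs.
  have h1 : Rle d d1 by apply Rmin_l.
  have h2 : Rle d (Rminus t0 c) by apply: Rle_trans (Rmin_r _ _) (Rmin_l _ _).
  have h3 : Rle d (Rminus e t0) by apply: Rle_trans (Rmin_r _ _) (Rmin_r _ _).
  split; last (apply: hd1; apply: Rlt_le_trans hs h1);
  move: hs h2 h3; rewrite /Rminus => hs h2 h3; move: hs; split_Rabs; lra.
pose wd t := \col_m pick_dC (fun s => w s m 0) t.
have hwd : forall t, Rlt c t -> Rlt t e -> forall m, dC (fun s => w s m 0) t (wd t m 0).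
  by move=> t ct te m; rewrite mxE; apply: pick_dC_spec; apply: hw.
have prop : forall t, Rlt (Rabs (Rminus t t0)) d -> exists a, wd t = a *: w t.
  move=> t ht; case: (inJ t ht) => ct te nzt.
  have nzw : w t != 0 by apply/negP => /eqP e0; move: nzt; rewrite e0 mxE eqxx.
  apply: (hK t ct te) => //; last exact: hAw.
  (* product rule *)
  have hz : A' t *m w t + A t *m wd t = 0.
    apply/matrixP => m z; rewrite (ord1 z) [RHS]mxE.
    have hp : dC (fun s => (A s *m w s) m 0) t ((A' t *m w t + A t *m wd t) m 0).
      have -> : (fun s => (A s *m w s) m 0) = fun s => \sum_k A s m k * w s k 0.
        by apply: functional_extensionality => s; rewrite mxE.
      rewrite !mxE -big_split /=.
      apply: dC_sum => k _; apply: dC_mul; [exact: hA | exact: hwd].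
    have hz0 : dC (fun s => (A s *m w s) m 0) t 0.
      have ld : Rlt 0 (Rmin (Rminus t c) (Rminus e t)) by apply: Rmin_pos; apply: Rlt_Rminus.
      apply: (dC_local ld _ (dC_const 0 t)) => s hs.
      have h2 : Rle (Rmin (Rminus t c) (Rminus e t)) (Rminus t c) by apply Rmin_l.
      have h3 : Rle (Rmin (Rminus t c) (Rminus e t)) (Rminus e t) by apply Rmin_r.
      rewrite hAw ?mxE //; move: hs h2 h3; rewrite /Rminus => hs h2 h3; move: hs; split_Rabs; lra.
    exact: dC_unique hp hz0.
  have : A t *m wd t = - (A' t *m w t) by apply/eqP; rewrite -addr_eq0 addrC hz.
  by rewrite (hA' t ct te (w t) (hAw t ct te)) oppr0.
pose al t := wd t i 0 / w t i 0.
have hal : forall t, Rlt (Rabs (Rminus t t0)) d -> forall m, wd t m 0 = al t * w t m 0.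
  move=> t ht m; rewrite /al; case: (prop t ht) => a ->; case: (inJ t ht) => _ _ nzt.
  rewrite !mxE; field; exact nzt.
have hrat : forall s, Rlt (Rabs (Rminus s t0)) d -> forall m,
    w s m 0 / w s i 0 = w t0 m 0 / w t0 i 0.
  move=> s hs m.
  apply: (ratio_const (wi := fun s => w s i 0) (wm := fun s => w s m 0) (al := al) (c := Rminus t0 d) (e := Rplus t0 d)).
  - move=> t ct te.
    have ht : Rlt (Rabs (Rminus t t0)) d by move: ct te; rewrite /Rminus => ct te; split_Rabs; lra.
    case: (inJ t ht) => c1 e1 nzt; split => //.
    by split; rewrite -hal //; apply: hwd.
  - by move: hs; rewrite /Rminus => hs; split_Rabs; lra.
  - by move: hs; rewrite /Rminus => hs; split_Rabs; lra.
  - by rewrite /Rminus; lra.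
  - by rewrite /Rminus; lra.
exists d; split => // s hs p.
case: (inJ s hs) => cs se nzs.
have nzws : w s != 0 by apply/negP => /eqP e0; move: nzs; rewrite e0 mxE eqxx.
have hws : w s = (w s i 0 / w t0 i 0) *: w t0.
  apply/matrixP => m z; rewrite (ord1 z) mxE.
  have := hrat s hs m => hr.
  have -> : w s m 0 = w s i 0 * (w s m 0 / w s i 0) by field; exact nzs.
  rewrite hr; field; exact nzi.
rewrite (K1_span p (hK s cs se) (hAw s cs se) nzws) (K1_span p (hK t0 ct0 t0e) (hAw t0 ct0 t0e) nz).
have c0nz : w s i 0 / w t0 i 0 != 0 by rewrite mulf_neq0 // invr_neq0.
move: hws c0nz; set c0 := w s i 0 / w t0 i 0 => hws c0nz.
split; case=> a ->.
  by exists (a * c0); rewrite hws scalerA.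
exists (a / c0); rewrite hws scalerA; congr (_ *: _); field; exact c0nz.
Qed.

Section Connect1.
Local Open Scope R_scope.

Lemma locconst_cont (g : R -> R) u :
  (exists d, 0 < d /\ forall y, Rabs (y - u) < d -> g y = g u) -> continuity_pt g u.
Proof.
case=> d [dp hd]; rewrite /continuity_pt /continue_in /limit1_in /limit_in => eps ep.
exists d; split => // y [_ hy]; move: hy; rewrite /dist /= /R_dist => hy.
rewrite hd // Rminus_eq_0 Rabs_R0; lra.
Qed.

Lemma clamp_lip s t y u : s <= t ->
  Rabs (Rmax s (Rmin y t) - Rmax s (Rmin u t)) <= Rabs (y - u).
Proof.
intros st. unfold Rmax, Rmin. destruct (Rle_dec y t); destruct (Rle_dec u t); destruct (Rle_dec s y); destruct (Rle_dec s u); destruct (Rle_dec s t); unfold Rabs; repeat destruct Rcase_abs; lra.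
Qed.

Lemma clamp_in s t y : s <= t -> s <= Rmax s (Rmin y t) <= t.
Proof. intros st. unfold Rmax, Rmin. destruct (Rle_dec y t); destruct (Rle_dec s y); destruct (Rle_dec s t); lra. Qed.

Lemma interval_const (Q : R -> Prop) c e :
  (forall t, c < t -> t < e -> exists d, 0 < d /\ forall s, Rabs (s - t) < d -> (Q s <-> Q t)) ->
  forall s t, c < s -> s < e -> c < t -> t < e -> (Q s <-> Q t).
Proof.
move=> hloc.
have key : forall s t, c < s -> s < e -> c < t -> t < e -> s < t -> (Q s <-> Q t).
  move=> s t cs se ct te st.
  pose cl y := Rmax s (Rmin y t).
  pose g y := if excluded_middle_informative (Q (cl y)) then 0 else 1.
  have gloc : forall u, exists d, 0 < d /\ forall y, Rabs (y - u) < d -> g y = g u.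
    move=> u; have [h1 h2] := clamp_in u (Rlt_le _ _ st).
    case: (hloc (cl u) ltac:(rewrite /cl; lra) ltac:(rewrite /cl; lra)) => d [dp hd].
    exists d; split => // y hy.
    have hq := hd (cl y) (Rle_lt_trans _ _ _ (clamp_lip y u (Rlt_le _ _ st)) hy).
    rewrite /g; case: excluded_middle_informative => a; case: excluded_middle_informative => b //; exfalso; tauto.
  have cls : cl s = s by rewrite /cl /Rmax /Rmin; destruct (Rle_dec s t); destruct (Rle_dec s s); lra.
  have clt : cl t = t by rewrite /cl /Rmax /Rmin; destruct (Rle_dec t t); destruct (Rle_dec s t); lra.
  have g01 : forall y, g y = 0 \/ g y = 1 by move=> y; rewrite /g; case: excluded_middle_informative => /=; auto.
  split => hq; apply: NNPP => hn.
  - pose f y := g y - / 2.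
    have fc : continuity f.
      move=> u; apply: locconst_cont; case: (gloc u) => d [dp hd]; exists d; split => // y hy.
      by rewrite /f hd.
    have fs : f s < 0 by rewrite /f /g cls; case: excluded_middle_informative => h /=; try lra; exfalso; tauto.
    have ft : 0 < f t by rewrite /f /g clt; case: excluded_middle_informative => h /=; try lra; exfalso; tauto.
    case: (IVT f s t fc st fs ft) => z [_ hz]; rewrite /f in hz.
    case: (g01 z) => h; rewrite h in hz; lra.
  - pose f y := / 2 - g y.
    have fc : continuity f.
      move=> u; apply: locconst_cont; case: (gloc u) => d [dp hd]; exists d; split => // y hy.
      by rewrite /f hd.
    have fs : f s < 0 by rewrite /f /g cls; case: excluded_middle_informative => h /=; try lra; exfalso; tauto.
    have ft : 0 < f t by rewrite /f /g clt; case: excluded_middle_informative => h /=; try lra; exfalso; tauto.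
    case: (IVT f s t fc st fs ft) => z [_ hz]; rewrite /f in hz.
    case: (g01 z) => h; rewrite h in hz; lra.
move=> s t cs se ct te; case: (Rtotal_order s t) => [st|[->|ts]].
- exact: key.
- tauto.
- have := key t s ct te cs se ts; tauto.
Qed.
End Connect1.

Lemma mx_nz m n (M : 'M[complex]_(m, n)) : M != 0 -> exists i j, M i j != 0.
Proof.
move=> nz; apply: NNPP => hn; apply: (negP nz); apply/eqP/matrixP => i j.
rewrite mxE; apply/eqP; apply: NNPP => h; apply: hn; exists i, j; exact/negP.
Qed.

Lemma K1_of_adj n (B : 'M[complex]_n.+1) : \adj B != 0 -> K1 B.
Proof.
move=> /mx_nz [i [j hij]].
have hS : \det (row' j (col' i B)) != 0.
  move: hij; rewrite mxE /cofactor; apply: contraNneq => ->; by rewrite mulr0.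
have Su : row' j (col' i B) \in unitmx by rewrite unitmxE unitfE.
have key : forall u : 'cV[complex]_n.+1, B *m u = 0 -> u i 0 = 0 -> u = 0.
  move=> u hu hui.
  have h1 : row' j (col' i B) *m row' i u = 0.
    apply/matrixP => r z; rewrite (ord1 z) !mxE.
    have := congr1 (fun M : 'cV[complex]_n.+1 => M (lift j r) 0) hu.
    rewrite !mxE (bigD1_ord i) //= hui mulr0 add0r => h; apply: (etrans _ h).
    by apply: eq_bigr => k _; rewrite !mxE.
  have h2 : row' i u = 0 by rewrite -(mulKmx Su (row' i u)) h1 mulmx0.
  apply/matrixP => m z; rewrite (ord1 z) [RHS]mxE.
  case: (unliftP i m) => [k ->|->] //.
  by have := congr1 (fun M : 'cV[complex]_n => M k 0) h2; rewrite !mxE.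
move=> v w hv hw nzw.
have wi : w i 0 != 0.
  apply/negP => /eqP h0; apply: (negP nzw); apply/eqP; exact: key.
exists (v i 0 / w i 0); apply/eqP; rewrite -subr_eq0; apply/eqP; apply: key.
  by rewrite mulmxBr -scalemxAr hv hw scaler0 subr0.
by rewrite !mxE divfK // subrr.
Qed.

Lemma K1_mulunit n (B P : 'M[complex]_n) : K1 B -> P \in unitmx -> K1 (B *m P).
Proof.
move=> hK hP v w hv hw nzw.
rewrite -mulmxA in hv; rewrite -mulmxA in hw.
have nzPw : P *m w != 0.
  apply/negP => /eqP h; apply: (negP nzw); apply/eqP.
  by rewrite -(mulKmx hP w) h mulmx0.
case: (hK _ _ hv hw nzPw) => a ha; exists a.
by rewrite -(mulKmx hP v) ha -scalemxAr mulKmx.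
Qed.

Lemma deriv_mulmx n (A B : 'M[{poly complex}]_n) :
  map_mx deriv (A *m B) = map_mx deriv A *m B + A *m map_mx deriv B.
Proof.
apply/matrixP => a b; rewrite !mxE linear_sum -big_split /=.
by apply: eq_bigr => k _; rewrite derivM !mxE.
Qed.

Lemma deriv_scalar n (p : {poly complex}) :
  map_mx deriv (p%:M : 'M_n) = (p^`())%:M.
Proof. by apply/matrixP => a b; rewrite !mxE derivMn. Qed.

Definition Mpoly n (Cf : nat -> Pt -> 'M[complex]_n) N x lam : 'M[{poly complex}]_n :=
  \sum_(j < N.+1) (('X + lam%:P) ^+ j) *: map_mx polyC (Cf j x).

Lemma Mpoly_ev n (Cf : nat -> Pt -> 'M[complex]_n) N x lam h :
  map_mx (horner_eval h) (Mpoly Cf N x lam) = Tev Cf N x (lam + h).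
Proof.
apply/matrixP => a b; rewrite /Mpoly /Tev !mxE !summxE horner_evalE horner_sum.
apply: eq_bigr => j _; rewrite !mxE hornerM hornerC.
by rewrite horner_exp hornerD hornerX hornerC addrC.
Qed.

Lemma Cnorm_sub (a b : complex) : Rle (Cnorm (a - b)) (Rplus (Cnorm a) (Cnorm b)).
Proof. by have := Cnorm_add a (Copp b); rewrite Cnorm_opp. Qed.

Lemma Cnorm_sumR (I : Type) (s : seq I) (F : I -> complex) :
  Rle (Cnorm (\sum_(i <- s) F i)) (\big[Rplus/R0]_(i <- s) Cnorm (F i)).
Proof.
elim: s => [|x s IH]; first by rewrite !big_nil Cnorm_C0; apply Rle_refl.
rewrite !big_cons; apply: Rle_trans (Cnorm_add _ _) _; apply Rplus_le_compat_l; exact IH.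
Qed.

Lemma Cnorm_expr_le1 (h : complex) k : Rle (Cnorm h) 1 -> Rle (Cnorm (h ^+ k)) 1.
Proof.
move=> h1; elim: k => [|k IH].
  rewrite expr0 /Cnorm /=. rewrite Rmult_0_l Rplus_0_r Rmult_1_r Rmult_1_r sqrt_1; apply Rle_refl.
rewrite exprS; have -> : h * h ^+ k = Cmul h (h ^+ k) by [].
rewrite Cnorm_mul; have := Cnorm_ge0 h; have := Cnorm_ge0 (h ^+ k); nra.
Qed.

Lemma poly_bound (r : {poly complex}) : exists K, Rle 0 K /\
  forall h, Rle (Cnorm h) 1 -> Rle (Cnorm r.[h]) K.
Proof.
exists (\big[Rplus/R0]_(i <- index_enum 'I_(size r)) Cnorm (r`_i)); split.
  elim: (index_enum _) => [|x s IH]; rewrite ?big_nil ?big_cons; first by apply Rle_refl.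
  have := Cnorm_ge0 (r`_x); lra.
move=> h h1; rewrite horner_coef; apply: Rle_trans (Cnorm_sumR _ _) _.
elim: (index_enum _) => [|x s IH]; rewrite ?big_nil ?big_cons; first by apply Rle_refl.
apply Rplus_le_compat => //.
have -> : r`_x * h ^+ x = Cmul r`_x (h ^+ x) by [].
rewrite Cnorm_mul; have := Cnorm_expr_le1 x h1; have := Cnorm_ge0 (r`_x);
  have := Cnorm_ge0 (h ^+ x); nra.
Qed.

Lemma limit_contra (l : complex) (F : complex -> complex) K : l != 0 -> Rle 0 K ->
  (forall h, Rle (Cnorm h) 1 -> Rle (Cnorm (F h)) K) ->
  (forall eps, Rlt 0 eps -> exists delta, Rlt 0 delta /\ forall h, h != 0 ->
      Rlt (Cnorm h) delta -> Rlt (Cnorm (F h * h - l)) eps) -> False.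
Proof.
move=> lnz K0 hK hlim.
have lp : Rlt 0 (Cnorm l).
  apply: Cnorm_pos => e; apply: (negP lnz); rewrite e; apply/eqP; reflexivity.
have e2 : Rlt 0 (Rdiv (Cnorm l) 2) by lra.
case: (hlim _ e2) => d [dp hd].
set s := Rmin (Rdiv d 2) (Rmin (Rdiv 1 2) (Rdiv (Cnorm l) (Rmult 2 (Rplus K 1)))).
have sp : Rlt 0 s.
  apply: Rmin_pos; first lra; apply: Rmin_pos; first lra.
  apply: Rdiv_lt_0_compat => //; lra.
have s1 : Rle s (Rdiv d 2) by apply Rmin_l.
have s2 : Rle s (Rdiv 1 2) by apply: Rle_trans (Rmin_r _ _) (Rmin_l _ _).
have s3 : Rle s (Rdiv (Cnorm l) (Rmult 2 (Rplus K 1))) by apply: Rle_trans (Rmin_r _ _) (Rmin_r _ _).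
set h := mkC s R0.
have hn : Cnorm h = s by rewrite /h Cnorm_real Rabs_pos_eq //; lra.
have hnz : h != 0.
  apply/negP => /eqP e; have := congr1 Cre e; rewrite /h /=; lra.
have H1 := hd h hnz ltac:(rewrite hn; lra).
have H2 := hK h ltac:(rewrite hn; lra).
have H3 : Rle (Cnorm (F h * h)) (Rmult K s).
  have -> : F h * h = Cmul (F h) h by [].
  rewrite Cnorm_mul hn; apply Rmult_le_compat_r; lra.
have H4 : Rlt (Rmult K s) (Rdiv (Cnorm l) 2).
  have : Rle (Rmult K s) (Rmult K (Rdiv (Cnorm l) (Rmult 2 (Rplus K 1)))) by apply Rmult_le_compat_l.
  have : Rlt (Rmult K (Rdiv (Cnorm l) (Rmult 2 (Rplus K 1)))) (Rdiv (Cnorm l) 2).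
    apply: (Rmult_lt_reg_r (Rmult 2 (Rplus K 1))); first lra.
    field_simplify; try lra.
  move=> ha hb; lra.
have H5 := Cnorm_sub (F h * h) (F h * h - l).
have E : F h * h - (F h * h - l) = l by rewrite opprB addrC subrK.
rewrite E in H5.
lra.
Qed.

Lemma adj_nz n (Cf : nat -> Pt -> 'M[complex]_n) N x lam :
  simple_zero (fun l => \det (Tev Cf N x l)) lam -> \adj (Tev Cf N x lam) != 0.
Proof.
case=> hz [l [lnz hl]]; rewrite /= in hz.
set Mp := Mpoly Cf N x lam.
set p := \det Mp.
have hev : forall h, p.[h] = \det (Tev Cf N x (lam + h)).
  by move=> h; rewrite -Mpoly_ev det_map_mx.
have hp0 : p.[0] = 0 by rewrite hev addr0.
have [q hq] : exists q, p = q * 'X.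
  have /factor_theorem [q hq] : root p 0 by rewrite /root hp0.
  by exists q; rewrite hq subr0.
have hA0 : map_mx (horner_eval 0) Mp = Tev Cf N x lam by rewrite Mpoly_ev addr0.
apply/negP => /eqP hadj.
have hq0 : q.[0] = 0.
  apply/eqP; apply: contraT => hq0.
  have H := congr1 (map_mx (horner_eval 0)) (congr1 (map_mx deriv) (mul_mx_adj Mp)).
  rewrite deriv_mulmx deriv_scalar map_mxD !map_mxM map_mx_adj hA0 hadj mulmx0 add0r map_scalar_mx in H.
  have hd : (p^`()).[0] = q.[0].
    by rewrite hq derivM derivX hornerD !hornerM hornerX mulr0 add0r hornerC mulr1.
  set Y := (X in _ *m X = _) in H.
  have H' : Tev Cf N x lam *m Y = ((p^`()).[0])%:M by exact H.
  rewrite hd in H'.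
  have : Tev Cf N x lam *m ((q.[0])^-1 *: Y) = 1%:M.
    by rewrite -scalemxAr H' scale_scalar_mx mulVf.
  case/mulmx1_unit => hu _; move: hu; rewrite unitmxE unitfE hz; by rewrite eqxx.
have [r hr] : exists r, q = r * 'X.
  have /factor_theorem [r hr] : root q 0 by rewrite /root hq0.
  by exists r; rewrite hr subr0.
case: (poly_bound r) => K [K0 hK].
apply: (limit_contra (F := fun h => r.[h]) lnz K0 hK) => eps ep.
case: (hl eps ep) => d [dp hd]; exists d; split => // h hnz hh.
have := hd h hnz hh; rewrite -hev hz hq hr !hornerM hornerX subr0.
by rewrite (mulfK hnz).
Qed.

Lemma adj_unit n (P : 'M[complex]_n) : P \in unitmx -> \adj P \in unitmx.
Proof.
move=> hP; have hd : \det P != 0 by move: hP; rewrite unitmxE unitfE.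
have : \adj P *m ((\det P)^-1 *: P) = 1%:M.
  by rewrite -scalemxAr mul_adj_mx scale_scalar_mx mulVf.
by case/mulmx1_unit.
Qed.

Lemma kervec n (B P : 'M[complex]_n) (j : 'I_n) : \det B = 0 -> P \in unitmx ->
  col j (\adj B) != 0 ->
  col j (\adj P *m \adj B) != 0 /\ (B *m P) *m col j (\adj P *m \adj B) = 0.
Proof.
move=> hB hP hc; split.
  rewrite !colE -mulmxA; apply/negP => /eqP h; apply: (negP hc); apply/eqP.
  by rewrite colE -(mulKmx (adj_unit hP) (\adj B *m delta_mx j 0)) h mulmx0.
rewrite colE !mulmxA -(mulmxA B P) mul_mx_adj mul_mx_scalar -scalemxAl.
by rewrite mul_mx_adj hB -scalemxAl mul_scalar_mx scale0r scaler0.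
Qed.

Lemma kervec0 n (B P : 'M[complex]_n) (j : 'I_n) : \det B = 0 ->
  (B *m P) *m col j (\adj P *m \adj B) = 0.
Proof.
move=> hB.
rewrite colE !mulmxA -(mulmxA B P) mul_mx_adj mul_mx_scalar -scalemxAl.
by rewrite mul_mx_adj hB -scalemxAl mul_scalar_mx scale0r scaler0.
Qed.

Section Geo.
Local Open Scope R_scope.
Lemma sqrt_ge_abs1 a b : Rabs a <= sqrt (a ^ 2 + b ^ 2).
Proof.
rewrite -(sqrt_Rsqr_abs a); apply sqrt_le_1_alt; rewrite /Rsqr /=; nra.
Qed.
Lemma sqrt_ge_abs2 a b : Rabs b <= sqrt (a ^ 2 + b ^ 2).
Proof.
rewrite -(sqrt_Rsqr_abs b); apply sqrt_le_1_alt; rewrite /Rsqr /=; nra.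
Qed.
Lemma sqrt_le_sum a b : sqrt (a ^ 2 + b ^ 2) <= Rabs a + Rabs b.
Proof.
apply Rsqr_incr_0_var; last (have := Rabs_pos a; have := Rabs_pos b; lra).
rewrite Rsqr_sqrt; last (apply Rplus_le_le_0_compat; apply pow2_ge_0).
rewrite /Rsqr /=; have := Rabs_pos a; have := Rabs_pos b.
have ea : a * a = Rabs a * Rabs a by rewrite -Rabs_mult Rabs_pos_eq //; nra.
have eb : b * b = Rabs b * Rabs b by rewrite -Rabs_mult Rabs_pos_eq //; nra.
nra.
Qed.
Lemma ball_coord x r y : ball2 x r y -> Rabs (fst y - fst x) < r /\ Rabs (snd y - snd x) < r.
Proof.
rewrite /ball2 => h; split; [apply: Rle_lt_trans (sqrt_ge_abs1 _ _) h | apply: Rle_lt_trans (sqrt_ge_abs2 _ _) h].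
Qed.
Lemma ball_hor a1 a2 r t : Rabs (t - a1) < r -> ball2 (a1, a2) r (t, a2).
Proof.
move=> h; rewrite /ball2 /=; apply: Rle_lt_trans (sqrt_le_sum _ _) _.
rewrite Rminus_eq_0 Rabs_R0; lra.
Qed.
Lemma ball_ver a1 a2 y1 r t : Rabs (y1 - a1) < r / 2 -> Rabs (t - a2) < r / 2 ->
  ball2 (a1, a2) r (y1, t).
Proof.
move=> h1 h2; rewrite /ball2 /=; apply: Rle_lt_trans (sqrt_le_sum _ _) _; lra.
Qed.
Lemma in_int a r t : a - r < t -> t < a + r -> Rabs (t - a) < r.
Proof. move=> h1 h2; split_Rabs; lra. Qed.
Lemma int_in a r t : Rabs (t - a) < r -> a - r < t /\ t < a + r.
Proof. move=> h; split; move: h; split_Rabs; lra. Qed.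
End Geo.

Lemma pder_line k (f : Pt -> complex) x t d :
  is_pderivC k f (shift k x t) d -> dC (fun s => f (shift k x s)) t d.
Proof. by case: k. Qed.

Lemma pderivC_eq k f x d : is_pderivC k f x d -> pderivC k f x = d.
Proof.
move=> h; rewrite /pderivC; case: excluded_middle_informative => [e|ne]; last by exfalso; apply: ne; exists d.
have := proj2_sig (constructive_indefinite_description _ e).
move: (proj1_sig _) => d' h'.
exact: (dC_unique (f := fun t => f (shift k x t)) (t := xcomp k x) h' h).
Qed.

Theorem mainTheorem2 (n N : nat) (Omega : Pt -> Prop)
    (Phi : Pt -> complex -> 'M[complex]_n) (Cf : nat -> Pt -> 'M[complex]_n)
    (lam_i : complex) (r : R) (U : xdir -> Pt -> complex -> 'M[complex]_n) :
  open_set Omega -> connected Omega -> Rlt 0 r ->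
  (* Phi: smooth in x, holomorphic in lambda near lam_i, invertible *)
  (forall lam : complex, Rlt (Cnorm (lam - lam_i)) r -> smooth_mx Omega (fun x => Phi x lam)) ->
  (forall x (lam : complex), Omega x -> Rlt (Cnorm (lam - lam_i)) r ->
     holo_mx (Phi x) lam /\ Phi x lam \in unitmx) ->
  (forall x, Omega x -> Phi x lam_i \in unitmx) ->
  (* T = sum_{j<=N} C_j lambda^j with smooth coefficients *)
  (forall j, (j <= N)%N -> smooth_mx Omega (Cf j)) ->
  (* lam_i is a simple zero of det T(x; .) *)
  (forall x, Omega x -> simple_zero (fun lam => \det (Tev Cf N x lam)) lam_i) ->
  (* Phi~_{,k} = U~_k Phi~ with U~_k holomorphic in lambda near lam_i *)
  (forall k x (lam : complex), Omega x -> Rlt (Cnorm (lam - lam_i)) r ->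
     holo_mx (U k x) lam /\
     is_pderiv_mx k (fun y => tPhi Cf N Phi y lam) x
                  (U k x lam *m tPhi Cf N Phi x lam)) ->
  exists p : 'cV[complex]_n, p != 0 /\
    forall x, Omega x ->
      tPhi Cf N Phi x lam_i *m p = 0 /\
      forall k, pderiv_mx k (fun y => tPhi Cf N Phi y lam_i) x *m p = 0.
Proof.
move=> HO HC Hr HPs HPh HPu HCs HT HU.
have h0 : Rlt (Cnorm (lam_i - lam_i)) r.
  have e0 : Cnorm (lam_i - lam_i) = R0 by rewrite subrr; exact: Cnorm_C0.
  by rewrite e0.
case: n Phi Cf U HPs HPh HPu HCs HT HU => [|n] Phi Cf U HPs HPh HPu HCs HT HU.
  exfalso; case: HC => [[x0 Hx0] _]; case: (HT x0 Hx0) => hz _; move: hz.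
  by rewrite /= det_mx00 => /eqP; rewrite oner_eq0.
pose B := fun x => Tev Cf N x lam_i.
pose P0 := fun x => Phi x lam_i.
pose A := fun x => tPhi Cf N Phi x lam_i.
have hdetB : forall x, Omega x -> \det (B x) = 0 by move=> x hx; case: (HT x hx).
have hadjB : forall x, Omega x -> \adj (B x) != 0 by move=> x hx; apply: adj_nz; exact: HT.
have hK : forall x, Omega x -> K1 (A x).
  by move=> x hx; apply: K1_mulunit; [apply: K1_of_adj; exact: hadjB | exact: HPu].
have hkv : forall x, Omega x -> exists j, col j (\adj (P0 x) *m \adj (B x)) != 0.
  move=> x hx; case: (mx_nz (hadjB x hx)) => i [j hij]; exists j.
  have hc : col j (\adj (B x)) != 0.
    apply/negP => /eqP hc; move: hij.
    have -> : \adj (B x) i j = col j (\adj (B x)) i 0 by rewrite [RHS]mxE.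
    by rewrite hc mxE eqxx.
  exact: (kervec (hdetB x hx) (HPu x hx) hc).1.
have hline : forall k x c e, (forall t, Rlt c t -> Rlt t e -> Omega (shift k x t)) ->
    forall s t, Rlt c s -> Rlt s e -> Rlt c t -> Rlt t e ->
    forall p : 'cV[complex]_n.+1, (A (shift k x s) *m p = 0 <-> A (shift k x t) *m p = 0).
  move=> k x c e hom s t cs se ct te p.
  apply: (interval_const (Q := fun t => A (shift k x t) *m p = 0) (c := c) (e := e)) => // t0 ct0 t0e.
  case: (hkv _ (hom t0 ct0 t0e)) => j wnz.
  have := core (A := fun s => A (shift k x s))
     (A' := fun s => U k (shift k x s) lam_i *m A (shift k x s))
     (w := fun s => col j (\adj (P0 (shift k x s)) *m \adj (B (shift k x s)))) ct0 t0e _ _ _ _ _ wnz.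
  case.
  - move=> t' c' e' a b.
    have := (HU k (shift k x t') lam_i (hom t' c' e') h0).2 a b.
    exact: pder_line.
  - by move=> t' _ _ v hv; rewrite -mulmxA hv mulmx0.
  - move=> t' c' e'.
    exact: hK (hom t' c' e').
  - move=> t' c' e' a.
    have -> : (fun s1 => col j (\adj (P0 (shift k x s1)) *m \adj (B (shift k x s1))) a 0) =
              (fun s1 => (\adj (P0 (shift k x s1)) *m \adj (B (shift k x s1))) a j).
      by apply: functional_extensionality => s1; rewrite mxE.
    have Pc : forall c0, ex_dC (fun _ : R => c0) t' := fun c0 => ex_dC_const c0 t'.
    have Pa : forall f g, ex_dC f t' -> ex_dC g t' -> ex_dC (fun s1 => f s1 + g s1) t' :=
      fun f g => @ex_dC_add f g t'.
    have Pm : forall f g, ex_dC f t' -> ex_dC g t' -> ex_dC (fun s1 => f s1 * g s1) t' :=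
      fun f g => @ex_dC_mul f g t'.
    apply: (Pr_mulmx (Pr := fun f => ex_dC f t') Pc Pa Pm (A := fun s1 => \adj (P0 (shift k x s1))) (B := fun s1 => \adj (B (shift k x s1)))).
    + move=> i0 j1.
      have hM : forall a' b', ex_dC (fun s1 => P0 (shift k x s1) a' b') t'.
        move=> a' b'; case: ((HPs lam_i h0 a' b' [::] (shift k x t') (hom t' c' e')).2 k) => d hd.
        by exists d; exact: (pder_line (f := fun y => Phi y lam_i a' b') hd).
      exact: (Pr_adj (Pr := fun f => ex_dC f t') Pc Pa Pm hM i0 j1).
    + move=> i0 j1.
      suff hM : forall a' b', ex_dC (fun s1 => B (shift k x s1) a' b') t'.
        exact: (Pr_adj (Pr := fun f => ex_dC f t') Pc Pa Pm hM i0 j1).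
      move=> a' b'.
      have -> : (fun s1 => B (shift k x s1) a' b') =
                (fun s1 => \sum_(j0 < N.+1) lam_i ^+ j0 * Cf j0 (shift k x s1) a' b').
        apply: functional_extensionality => s1; rewrite /B /Tev summxE.
        by apply: eq_bigr => j0 _; rewrite mxE.
      apply: (Pr_sum (Pr := fun f => ex_dC f t') Pc Pa) => j0 _; apply: Pm; first exact: Pc.
      have hj0 : (j0 <= N)%N by rewrite -ltnS ltn_ord.
      case: ((HCs j0 hj0 a' b' [::] (shift k x t') (hom t' c' e')).2 k) => d hd.
      by exists d; exact: (pder_line (f := fun y => Cf j0 y a' b') hd).
  - move=> t' c' e'; apply: kervec0; exact: hdetB (hom t' c' e').
  - move=> d [dp hd]; exists d; split => // s0 hs0.
    exact: hd.
have hloc : forall x1, Omega x1 -> exists rho, Rlt 0 rho /\ forall y, ball2 x1 rho y ->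
    Omega y /\ forall p : 'cV[complex]_n.+1, (A y *m p = 0 <-> A x1 *m p = 0).
  case=> a1 a2 hx1; case: (HO _ hx1) => r0 [r0p hb].
  exists (Rdiv r0 2); split; first lra.
  case=> y1 y2 hy; case: (ball_coord hy) => /= hy1 hy2.
  split.
    apply: hb; rewrite /ball2 /=; move: hy; rewrite /ball2 /= => hy; lra.
  move=> p.
  have H1 := hline X1 (a1, a2) (Rminus a1 r0) (Rplus a1 r0)
    ltac:(move=> t ct te; apply: hb; apply: ball_hor; exact: in_int) y1 a1.
  have H2 := hline X2 (y1, a2) (Rminus a2 (Rdiv r0 2)) (Rplus a2 (Rdiv r0 2))
    ltac:(move=> t ct te; apply: hb; apply: ball_ver => /=; [lra | exact: in_int]) y2 a2.
  rewrite /= in H1 H2.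
  have [c1 e1] := int_in hy1. have [c2 e2] := int_in hy2.
  rewrite (H2 c2 e2 ltac:(lra) ltac:(lra) p).
  apply: (H1 ltac:(lra) ltac:(lra) ltac:(lra) ltac:(lra) p).
case: HC => [[x0 hx0] HCc].
case: (hkv x0 hx0) => j0 pnz.
set p := col j0 (\adj (P0 x0) *m \adj (B x0)).
have hp0 : A x0 *m p = 0 by apply: kervec0; exact: hdetB.
have hall : forall x, Omega x -> A x *m p = 0.
  have := HCc (fun y => Omega y /\ A y *m p = 0) (fun y => Omega y /\ A y *m p <> 0).
  case.
  - move=> y [hy hyp]; case: (hloc y hy) => rho [rp hr]; exists rho; split => // z hz.
    case: (hr z hz) => hz1 hz2; split => //; by apply/hz2.
  - move=> y [hy hyp]; case: (hloc y hy) => rho [rp hr]; exists rho; split => // z hz.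
    case: (hr z hz) => hz1 hz2; split => // h; apply: hyp; by apply/hz2.
  - move=> y hy; case: (classic (A y *m p = 0)); [left|right]; by split.
  - by move=> y _ [_ h1] [_ h2].
  - by move=> h x hx; case: (h x hx).
  - by move=> h; exfalso; case: (h x0 hx0).
exists p; split => // x hx; split; first exact: hall.
move=> k.
have -> : pderiv_mx k (fun y => tPhi Cf N Phi y lam_i) x = U k x lam_i *m A x.
  apply/matrixP => a b; rewrite mxE; apply: pderivC_eq.
  exact: ((HU k x lam_i hx h0).2 a b).
by rewrite -mulmxA (hall x hx) mulmx0.
Qed.
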